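(* Let $N\ge1$ and let $\mu_N\subset\mathbb{C}^*$ act on $\mathbb{C}^*$ by multiplication. The strict holomorphic endomorphisms of $[\mathbb{C}^*/\mu_N]$ are exactly the pairs $(\widetilde\psi,\sigma)$ with $\sigma(\zeta)=\zeta^m$ and $\widetilde\psi(z)=z^m g(z^N)$, where $m\in\mathbb{Z}$ and $g:\mathbb{C}^*\to\mathbb{C}^*$ is holomorphic. Modulo $2$-isomorphism, $g$ is determined up to multiplication by a constant root of unity.
   Context: For a subgroup $\Gamma\subset\mathbb{C}^*$ acting on $\mathbb{C}^*$ by multiplication, a strict endomorphism of $[\mathbb{C}^*/\Gamma]$ is a pair $(\widetilde\psi,\sigma)$ with $\widetilde\psi:\mathbb{C}^*\to\mathbb{C}^*$ holomorphic and $\sigma:\Gamma\to\Gamma$ a homomorphism such that $\widetilde\psi(\gamma z)=\sigma(\gamma)\widetilde\psi(z)$ for all $\gamma,z$. Two strict pairs $(\widetilde\psi,\sigma)$, $(\widetilde\psi',\sigma)$ are $2$-isomorphic if $\widetilde\psi'=a\widetilde\psi$ for some constant $a\in\Gamma$. $\mu_N$ is the group of $N$-th roots of unity. *)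

(* Defs.v *)
From Stdlib Require Import Reals ZArith.
From Coquelicot Require Import Coquelicot.

Open Scope C_scope.

Definition Czpow (z : C) (m : Z) : C :=
  match m with
  | Z0 => 1
  | Zpos p => Cpow z (Pos.to_nat p)
  | Zneg p => / Cpow z (Pos.to_nat p)
  end.

Definition holo_Cstar (f : C -> C) : Prop :=
  forall z : C, z <> 0 -> @ex_derive C_AbsRing C_NormedModule f z.

Definition maps_Cstar (f : C -> C) : Prop :=
  forall z : C, z <> 0 -> f z <> 0.

(* a holomorphic map C^* -> C^* (only values on C^* matter) *)
Definition holo_map_Cstar (f : C -> C) : Prop := holo_Cstar f /\ maps_Cstar f.

Definition mu (N : nat) (z : C) : Prop := Cpow z N = 1.

(* strict endomorphism (psi, sigma) of [C^*/mu_N]; sigma is only relevant on mu_N *)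
Definition strict_endo (N : nat) (psi sigma : C -> C) : Prop :=
  holo_map_Cstar psi /\
  (forall g : C, mu N g -> mu N (sigma g)) /\
  (forall g h : C, mu N g -> mu N h -> sigma (g * h) = sigma g * sigma h) /\
  (forall g z : C, mu N g -> z <> 0 -> psi (g * z) = sigma g * psi z).

(* 2-isomorphism of strict pairs with the same sigma: psi' = a psi, a in mu_N *)
Definition two_iso (N : nat) (psi psi' : C -> C) : Prop :=
  exists a : C, mu N a /\ forall z : C, z <> 0 -> psi' z = a * psi z.

(* Main.v *)
Require Import Defs.
From Stdlib Require Import Reals ZArith Lra Lia.
From Coquelicot Require Import Coquelicot.
Open Scope C_scope.
Definition CU := AbsRing_UniformSpace C_AbsRing.
Definition Ccont (f : C -> C) (x : C) :=
  forall eps : posreal, @locally CU x (fun y => Cmod (f y - f x) < eps)%R.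
Definition Rcont (A : C -> R) (x : C) := @continuous CU R_UniformSpace A x.
Definition exd (f : C -> C) (x : C) := @ex_derive C_AbsRing C_NormedModule f x.

Lemma locC (P : C -> Prop) x (d : posreal) :
  (forall y, Cmod (y - x) < d -> P y)%R -> @locally CU x P.
Proof. intros H. exists d. intros y Hy. apply H. exact Hy. Qed.

Lemma carath (f phi : C -> C) x : Ccont phi x ->
  @locally CU x (fun y => f y - f x = (y - x) * phi y) ->
  @is_derive C_AbsRing C_NormedModule f x (phi x).
Proof.
  intros Hc Heq. split. apply is_linear_scal_l.
  intros x' Hx'. apply (@is_filter_lim_locally_unique C_AbsRing (AbsRing_NormedModule C_AbsRing)) in Hx'. subst x'.
  intros eps. generalize (filter_and _ _ (Hc eps) Heq). apply filter_imp.
  intros y [H1 H2].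
  change (Cmod ((f y - f x) - (y - x) * phi x) <= eps * Cmod (y - x))%R.
  rewrite H2.
  replace ((y - x) * phi y - (y - x) * phi x) with ((y-x)*(phi y - phi x)) by ring.
  rewrite Cmod_mult. rewrite Rmult_comm. apply Rmult_le_compat_r. apply Cmod_ge_0. lra.
Qed.

Lemma sqrt2_lt_2 : (sqrt 2 < 2)%R.
Proof.
  assert (H := sqrt_pos 2). assert (H2 := sqrt_sqrt 2). nra.
Qed.

Lemma Ccont_deriv f x : exd f x -> Ccont f x.
Proof.
  intros Hd eps. apply (@ex_derive_continuous C_AbsRing C_NormedModule f x Hd (fun z => Cmod (z - f x) < eps)%R).
  assert (He : (0 < eps / 2)%R) by (destruct eps; simpl; lra).
  exists (mkposreal _ He). intros z Hz.
  apply C_NormedModule_mixin_compat2 in Hz. simpl in Hz.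
  assert (H2 := sqrt2_lt_2). destruct eps as [e ep]; simpl in *.
  change (Cmod (z - f x) < e)%R. change (Cmod (z - f x) < sqrt 2 * (e/2))%R in Hz.
  nra.
Qed.

Lemma Ccont_comp (f g : C -> C) x : Ccont f x -> Ccont g (f x) -> Ccont (fun y => g (f y)) x.
Proof.
  intros Hf Hg eps. destruct (Hg eps) as [d Hd].
  generalize (Hf d). apply filter_imp. intros y Hy. apply Hd. exact Hy.
Qed.

Lemma Rcont_eps (A : C -> R) x :
  (forall eps : posreal, @locally CU x (fun y => Rabs (A y - A x) < eps)%R) -> Rcont A x.
Proof.
  intros H P [e He]. unfold filtermap. generalize (H e). apply filter_imp. intros y Hy. apply He. exact Hy.
Qed.

Lemma Rcont_loc (A : C -> R) x : Rcont A x -> forall eps : posreal,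
   @locally CU x (fun y => Rabs (A y - A x) < eps)%R.
Proof.
  intros H eps. apply (H (fun r => Rabs (r - A x) < eps)%R). exists eps. intros y Hy. exact Hy.
Qed.

Lemma Cmod_pair_le (a b : R) : (Cmod (a, b) <= Rabs a + Rabs b)%R.
Proof.
  unfold Cmod; simpl. rewrite <- (sqrt_pow2 (Rabs a + Rabs b)).
  2: { assert (H1 := Rabs_pos a); assert (H2 := Rabs_pos b); lra. }
  apply sqrt_le_1_alt. rewrite <- (pow2_abs a) at 1. rewrite <- (pow2_abs b) at 1.
  assert (H1 := Rabs_pos a); assert (H2 := Rabs_pos b). nra.
Qed.

Lemma Ccont_pair (A B : C -> R) x : Rcont A x -> Rcont B x -> Ccont (fun y => (A y, B y)) x.
Proof.
  intros HA HB eps.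
  assert (He : (0 < eps / 2)%R) by (destruct eps; simpl; lra).
  generalize (filter_and _ _ (Rcont_loc A x HA (mkposreal _ He)) (Rcont_loc B x HB (mkposreal _ He))).
  apply filter_imp. simpl. intros y [H1 H2].
  eapply Rle_lt_trans. 
  replace ((A y, B y) - (A x, B x)) with (RtoC (A y - A x)%R + (0, B y - B x)%R) by
    (unfold Cminus, Cplus, Copp, RtoC; simpl; f_equal; ring).
  unfold RtoC, Cplus; simpl. rewrite Rplus_0_l, Rplus_0_r. apply Cmod_pair_le. lra.
Qed.

Lemma im_le_Cmod c : (Rabs (Im c) <= Cmod c)%R.
Proof. eapply Rle_trans; [apply Rmax_r|apply Rmax_Cmod]. Qed.

Lemma Rcont_fst f x : Ccont f x -> Rcont (fun y => fst (f y)) x.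
Proof.
  intros H. apply Rcont_eps. intros eps. generalize (H eps). apply filter_imp.
  intros y Hy. eapply Rle_lt_trans; [|exact Hy].
  replace (fst (f y) - fst (f x))%R with (Re (f y - f x)) by (simpl; ring).
  apply re_le_Cmod.
Qed.

Lemma Rcont_snd f x : Ccont f x -> Rcont (fun y => snd (f y)) x.
Proof.
  intros H. apply Rcont_eps. intros eps. generalize (H eps). apply filter_imp.
  intros y Hy. eapply Rle_lt_trans; [|exact Hy].
  replace (snd (f y) - snd (f x))%R with (Im (f y - f x)) by (simpl; ring).
  apply im_le_Cmod.
Qed.

Lemma Ccont_id x : Ccont (fun y => y) x.
Proof. intros eps. apply (locC _ x eps). auto. Qed.

Lemma Rcont_Cmod x : Rcont Cmod x.
Proof.
  apply Rcont_eps. intros eps. apply (locC _ x eps). intros y Hy.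
  apply Rabs_lt_between. split.
  - assert (H := Cmod_triangle y (x - y)). replace (y + (x - y)) with x in H by ring.
    replace (x - y) with (- (y - x)) in H by ring. rewrite Cmod_opp in H. lra.
  - assert (H := Cmod_triangle x (y - x)). replace (x + (y - x)) with y in H by ring. lra.
Qed.

Lemma Rcont_mult A B x : Rcont A x -> Rcont B x -> Rcont (fun y => A y * B y)%R x.
Proof. intros. exact (@continuous_mult CU R_AbsRing A B x H H0). Qed.
Lemma Rcont_plus A B x : Rcont A x -> Rcont B x -> Rcont (fun y => A y + B y)%R x.
Proof. intros. exact (@continuous_plus CU R_AbsRing R_NormedModule A B x H H0). Qed.
Lemma Rcont_opp A x : Rcont A x -> Rcont (fun y => - A y)%R x.
Proof. intros. exact (@continuous_opp CU R_AbsRing R_NormedModule A x H). Qed.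
Lemma Rcont_const (c : R) x : Rcont (fun _ => c) x.
Proof. apply (@continuous_const CU R_UniformSpace). Qed.
Lemma Rcont_compR (A : C -> R) (f : R -> R) x : Rcont A x -> continuity_pt f (A x) -> Rcont (fun y => f (A y)) x.
Proof. intros. apply (@continuous_comp CU R_UniformSpace R_UniformSpace A f). auto. apply continuity_pt_filterlim; auto. Qed.
Lemma Rcont_inv (A : C -> R) x : Rcont A x -> A x <> 0%R -> Rcont (fun y => / A y)%R x.
Proof. intros. apply (@continuous_comp CU R_UniformSpace R_UniformSpace A (fun r => / r)%R). auto. apply continuous_Rinv; auto. Qed.
Lemma Rcont_Re x : Rcont (fun y => fst y) x.
Proof. apply (Rcont_fst (fun y => y)). apply Ccont_id. Qed.
Lemma Rcont_Im x : Rcont (fun y => snd y) x.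
Proof. apply (Rcont_snd (fun y => y)). apply Ccont_id. Qed.

Lemma Ccont_mult f g x : Ccont f x -> Ccont g x -> Ccont (fun y => f y * g y) x.
Proof.
  intros Hf Hg. unfold Cmult.
  apply Ccont_pair.
  - apply Rcont_plus. apply Rcont_mult; [apply Rcont_fst|apply Rcont_fst]; auto.
    apply Rcont_opp. apply Rcont_mult; [apply Rcont_snd|apply Rcont_snd]; auto.
  - apply Rcont_plus; apply Rcont_mult; first [apply Rcont_fst; auto | apply Rcont_snd; auto].
Qed.

Lemma Ccont_RtoC A x : Rcont A x -> Ccont (fun y => RtoC (A y)) x.
Proof. intros. unfold RtoC. apply Ccont_pair; auto. apply Rcont_const. Qed.

Lemma Rcont_pos A x : Rcont A x -> (0 < A x)%R -> @locally CU x (fun y => 0 < A y)%R.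
Proof.
  intros H Hp. generalize (Rcont_loc A x H (mkposreal _ Hp)). apply filter_imp.
  simpl. intros y Hy. apply Rabs_lt_between in Hy. lra.
Qed.

Lemma Ccont_nz f x : Ccont f x -> f x <> 0 -> @locally CU x (fun y => f y <> 0).
Proof.
  intros H Hn. apply Cmod_gt_0 in Hn. generalize (H (mkposreal _ Hn)). apply filter_imp.
  simpl. intros y Hy E. rewrite E in Hy. replace (0 - f x) with (- f x) in Hy by ring.
  rewrite Cmod_opp in Hy. lra.
Qed.

Lemma conv f x d : @is_derive C_AbsRing C_NormedModule f x d -> @is_derive C_AbsRing (AbsRing_NormedModule C_AbsRing) f x d.
Proof. intros [H1 H2]. split. destruct H1 as [a b [M [c e]]]. constructor; auto. exists M. split; auto.
 intros x' Hx. apply (H2 x' Hx). Qed.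
Lemma conv2 f x d : @is_derive C_AbsRing (AbsRing_NormedModule C_AbsRing) f x d -> @is_derive C_AbsRing C_NormedModule f x d.
Proof. intros [H1 H2]. split. destruct H1 as [a b [M [c e]]]. constructor; auto. exists M. split; auto.
 intros x' Hx. apply (H2 x' Hx). Qed.
Lemma exd_mult f g x : exd f x -> exd g x -> exd (fun y => f y * g y) x.
Proof. intros [df Hf] [dg Hg]. eexists. apply conv2. apply (is_derive_mult (K:=C_AbsRing) f g x df dg (conv _ _ _ Hf) (conv _ _ _ Hg)).
 intros; apply Cmult_comm. Qed.
Lemma exd_plus f g x : exd f x -> exd g x -> exd (fun y => f y + g y) x.
Proof. intros [df Hf] [dg Hg]. eexists. apply (@is_derive_plus C_AbsRing C_NormedModule f g x df dg Hf Hg). Qed.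
Lemma exd_comp f g x : exd f (g x) -> exd g x -> exd (fun y => f (g y)) x.
Proof. intros [df Hf] [dg Hg]. eexists. apply (is_derive_comp (K:=C_AbsRing) (V:=C_NormedModule) f g x df dg Hf (conv _ _ _ Hg)). Qed.
Lemma exd_id x : exd (fun y => y) x.
Proof. eexists. apply conv2. apply (@is_derive_id C_AbsRing). Qed.
Lemma exd_const (c : C) x : exd (fun _ => c) x.
Proof. eexists. apply (@is_derive_const C_AbsRing C_NormedModule). Qed.
Lemma exd_ext_loc f g x : @locally CU x (fun y => f y = g y) -> exd f x -> exd g x.
Proof. intros H [d Hd]. exists d. apply (@is_derive_ext_loc C_AbsRing C_NormedModule f g x d H Hd). Qed.
Lemma exd_Cpow n x : exd (fun y => Cpow y n) x.
Proof.
  induction n. exact (exd_const 1 x).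
  simpl. apply exd_mult. apply exd_id. exact IHn.
Qed.

Lemma Rcont_sq A x : Rcont A x -> Rcont (fun y => A y ^ 2)%R x.
Proof. intros H. apply (Rcont_compR A (fun r => r ^ 2)%R). auto.
  apply derivable_continuous_pt. apply derivable_pt_pow. Qed.

Lemma Ccont_inv (x : C) : x <> 0 -> Ccont Cinv x.
Proof.
  intros Hx. unfold Cinv.
  assert (Hd : (fst x ^ 2 + snd x ^ 2 <> 0)%R).
  { intro E. apply Hx. apply Cmod_eq_0. unfold Cmod. rewrite E. apply sqrt_0. }
  apply Ccont_pair; unfold Rdiv.
  - apply Rcont_mult. apply Rcont_Re. apply Rcont_inv; auto.
    apply Rcont_plus; apply Rcont_sq; [apply Rcont_Re|apply Rcont_Im].
  - apply Rcont_mult. apply Rcont_opp, Rcont_Im. apply Rcont_inv; auto.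
    apply Rcont_plus; apply Rcont_sq; [apply Rcont_Re|apply Rcont_Im].
Qed.

Lemma Ccont_const (c : C) x : Ccont (fun _ => c) x.
Proof. intros eps. apply (locC _ x eps). intros y _. replace (c - c) with (RtoC 0) by ring.
  rewrite Cmod_0. destruct eps; simpl; lra. Qed.

Lemma loc_nz (x : C) : x <> 0 -> @locally CU x (fun y : C => y <> 0).
Proof. intros Hx. apply (Ccont_nz (fun y => y)); auto. apply Ccont_id. Qed.

Lemma exd_inv (x : C) : x <> 0 -> exd Cinv x.
Proof.
  intros Hx. exists ((fun y => - / x * / y) x).
  apply (carath Cinv (fun y => - / x * / y) x).
  - apply Ccont_mult. apply Ccont_const. apply Ccont_inv; auto.
  - generalize (loc_nz x Hx). apply filter_imp. intros y Hy. field. auto.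
Qed.

Lemma exd_inv_comp f x : exd f x -> f x <> 0 -> exd (fun y => / f y) x.
Proof. intros. apply (exd_comp Cinv f). apply exd_inv; auto. auto. Qed.

Lemma Cpow_nz' (z : C) n : z <> 0 -> Cpow z n <> 0.
Proof. apply Cpow_nz. Qed.


Lemma C1_neq_0 : (RtoC 1) <> (RtoC 0).
Proof. intro E. apply (f_equal fst) in E. simpl in E. lra. Qed.

Lemma Cinv_nz (a : C) : a <> 0 -> / a <> 0.
Proof. intros Ha E. assert (H := Cinv_r a Ha). rewrite E, Cmult_0_r in H.
  apply C1_neq_0. auto. Qed.

Lemma Czpow_nz (z : C) m : z <> 0 -> Czpow z m <> 0.
Proof.
  intros Hz. destruct m; simpl.
  - apply C1_neq_0.
  - apply Cpow_nz; auto.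
  - apply Cinv_nz, Cpow_nz; auto.
Qed.

Lemma Czpow_of_nat (z : C) j : Czpow z (Z.of_nat j) = Cpow z j.
Proof. destruct j. reflexivity. simpl. rewrite SuccNat2Pos.id_succ. reflexivity. Qed.

Lemma Czpow_mult (z w : C) m : z <> 0 -> w <> 0 -> Czpow (z * w) m = Czpow z m * Czpow w m.
Proof.
  intros Hz Hw. destruct m; simpl.
  - ring.
  - apply Cpow_mult_l.
  - rewrite Cpow_mult_l. assert (H1 := Cpow_nz z (Pos.to_nat p) Hz).
    assert (H2 := Cpow_nz w (Pos.to_nat p) Hw). field. split; auto.
Qed.

Lemma Cpow_comm (z : C) (a b : nat) : Cpow (Cpow z a) b = Cpow (Cpow z b) a.
Proof. rewrite <- !Cpow_mult_r. rewrite Nat.mul_comm. reflexivity. Qed.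

Lemma Cpow_Czpow (z : C) m n : z <> 0 -> Cpow (Czpow z m) n = Czpow (Cpow z n) m.
Proof.
  intros Hz. destruct m; simpl.
  - apply Cpow_1_l.
  - apply Cpow_comm.
  - rewrite Cpow_inv. rewrite Cpow_comm. reflexivity. apply Cpow_nz; auto.
Qed.

Lemma Czpow_one m : Czpow 1 m = 1.
Proof. destruct m; simpl; rewrite ?Cpow_1_l; auto. unfold Cinv, RtoC; simpl; f_equal; field. Qed.

Lemma exd_Czpow (x : C) m : x <> 0 -> exd (fun z => Czpow z m) x.
Proof.
  intros Hx. destruct m; simpl.
  - apply exd_const.
  - apply exd_Cpow.
  - apply (exd_inv_comp (fun z => Cpow z (Pos.to_nat p))). apply exd_Cpow. apply Cpow_nz; auto.
Qed.

Fixpoint Qp (z a : C) (n : nat) : C :=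
  match n with O => 0 | S n => Cpow z n + a * Qp z a n end.

Lemma Qp_factor z a n : Cpow z n - Cpow a n = (z - a) * Qp z a n.
Proof. induction n. simpl. ring. cbn [Qp Cpow].
  replace (z * Cpow z n - a * Cpow a n) with ((z - a) * Cpow z n + a * (Cpow z n - Cpow a n)) by ring.
  rewrite IHn. ring. Qed.

Lemma Qp_diag a n : Qp a a n * a = RtoC (INR n) * Cpow a n.
Proof. induction n. simpl. ring. cbn [Qp Cpow].
  replace ((Cpow a n + a * Qp a a n) * a) with (a * Cpow a n + a * (Qp a a n * a)) by ring.
  rewrite IHn. rewrite S_INR. rewrite RtoC_plus. ring. Qed.

Lemma Qp_nz (a : C) n : a <> 0 -> (1 <= n)%nat -> Qp a a n <> 0.
Proof.
  intros Ha Hn E. assert (H := Qp_diag a n). rewrite E, Cmult_0_l in H.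
  apply (f_equal Cmod) in H. rewrite Cmod_mult, Cmod_R, Cmod_R, Cmod_pow, Rabs_R0 in H.
  assert (0 < INR n)%R by (apply lt_0_INR; lia).
  assert (0 < Cmod a)%R by (apply Cmod_gt_0; auto).
  assert (0 < Cmod a ^ n)%R by (apply pow_lt; auto).
  rewrite Rabs_right in H by lra. nra.
Qed.

Lemma exd_Qp a n x : exd (fun z => Qp z a n) x.
Proof. induction n; simpl. apply exd_const. apply exd_plus. apply exd_Cpow.
  apply exd_mult. apply exd_const. auto. Qed.

Lemma inv_branch (h : C -> C) w0 n : (1 <= n)%nat -> Ccont h w0 -> h w0 <> 0 ->
  @locally CU w0 (fun w => Cpow (h w) n = w) -> exd h w0.
Proof.
  intros Hn Hc Hz Hl.
  set (z0 := h w0).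
  assert (HQ : Qp z0 z0 n <> 0) by (apply Qp_nz; auto).
  assert (Hc2 : Ccont (fun w => Qp (h w) z0 n) w0).
  { apply (Ccont_comp h (fun z => Qp z z0 n)); auto. apply Ccont_deriv, exd_Qp. }
  assert (Hc3 : Ccont (fun w => / Qp (h w) z0 n) w0).
  { apply (Ccont_comp (fun w => Qp (h w) z0 n) Cinv); auto. apply Ccont_inv. auto. }
  exists ((fun w => / Qp (h w) z0 n) w0).
  apply (carath h (fun w => / Qp (h w) z0 n) w0); auto.
  assert (E0 : Cpow z0 n = w0) by (apply (locally_singleton _ _ Hl)).
  generalize (filter_and _ _ Hl (Ccont_nz _ _ Hc2 HQ)). apply filter_imp.
  intros w [H1 H2]. fold z0.
  assert (E : w - w0 = (h w - z0) * Qp (h w) z0 n).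
  { rewrite <- Qp_factor. rewrite H1, E0. reflexivity. }
  rewrite E. field. auto.
Qed.

Definition cis (a : R) : C := (cos a, sin a).

Lemma cis_add a b : cis (a + b) = cis a * cis b.
Proof. unfold cis, Cmult; simpl. rewrite cos_plus, sin_plus. f_equal; ring. Qed.

Lemma cis_pow a n : Cpow (cis a) n = cis (INR n * a).
Proof.
  induction n. simpl. unfold cis. rewrite Rmult_0_l, cos_0, sin_0. reflexivity.
  cbn [Cpow]. rewrite IHn, <- cis_add. f_equal. rewrite S_INR. ring.
Qed.

Definition theta (w : C) : R := 2 * atan (Im w / (Cmod w + Re w)).

Lemma Cmod_sq (w : C) : (Cmod w * Cmod w = fst w * fst w + snd w * snd w)%R.
Proof. unfold Cmod. rewrite sqrt_sqrt. ring. nra. Qed.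

Lemma polar_pos (w : C) : (0 < Cmod w + Re w)%R -> w = RtoC (Cmod w) * cis (theta w).
Proof.
  intros Hp. assert (Hsq := Cmod_sq w). assert (Hr0 := Cmod_ge_0 w).
  unfold theta. destruct w as [x y]. simpl in *.
  set (r := Cmod (x, y)) in *.
  assert (Hr : (0 < r)%R) by nra.
  set (d := (r + x)%R) in *.
  set (t := (y / d)%R).
  assert (Ht : (1 + t * t = 2 * r / d)%R).
  { assert (Hdd : (d * d + y * y = 2 * r * d)%R) by (unfold d; nra).
    unfold t. replace (1 + y / d * (y / d))%R with ((d*d + y*y)/(d*d))%R by (field; lra).
    rewrite Hdd. field. lra. }
  assert (Hs : (sqrt (1 + t²) * sqrt (1 + t²) = 2 * r / d)%R).
  { rewrite sqrt_sqrt. unfold Rsqr. auto. unfold Rsqr. nra. }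
  assert (Hs0 : (0 < sqrt (1 + t²))%R). { apply sqrt_lt_R0. unfold Rsqr. nra. }
  unfold cis, Cmult, RtoC; simpl.
  rewrite cos_2a_cos, sin_2a, cos_atan, sin_atan.
  set (s := sqrt (1 + t²)) in *.
  assert (E1 : (2 * (1 / s) * (1 / s) = d / r)%R).
  { replace (2 * (1/s) * (1/s))%R with (2 / (s*s))%R by (field; lra). rewrite Hs. field. lra. }
  assert (E2 : (2 * (t / s) * (1 / s) = t * d / r)%R).
  { replace (2 * (t/s) * (1/s))%R with (2 * t / (s*s))%R by (field; lra). rewrite Hs. field. lra. }
  rewrite E1, E2. f_equal.
  - unfold d. field. lra.
  - unfold t. field. lra.
Qed.

Definition root_pos (N : nat) (w : C) : C :=
  RtoC (Rpower (Cmod w) (/ INR N)) * cis (theta w / INR N).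

Lemma Rpower_pos x a : (0 < Rpower x a)%R.
Proof. unfold Rpower. apply exp_pos. Qed.

Lemma INR_nz N : (1 <= N)%nat -> INR N <> 0%R.
Proof. intros H. apply not_0_INR. lia. Qed.

Lemma root_pos_pow N (w : C) : (1 <= N)%nat -> (0 < Cmod w + Re w)%R -> Cpow (root_pos N w) N = w.
Proof.
  intros HN Hp. unfold root_pos. rewrite Cpow_mult_l, <- RtoC_pow, cis_pow.
  assert (Hr : (0 < Cmod w)%R).
  { assert (H := Cmod_sq w). assert (H0 := Cmod_ge_0 w). destruct w as [x y]; simpl in *. nra. }
  rewrite <- Rpower_pow by apply Rpower_pos. rewrite Rpower_mult.
  rewrite Rinv_l by (apply INR_nz; auto). rewrite Rpower_1 by auto.
  replace (INR N * (theta w / INR N))%R with (theta w) by (field; apply INR_nz; auto).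
  symmetry. apply polar_pos. auto.
Qed.

Definition root (N : nat) (w : C) : C :=
  if Rlt_dec 0 (Cmod w + Re w) then root_pos N w else cis (PI / INR N) * root_pos N (- w).

Lemma neg_case (w : C) : w <> 0 -> ~ (0 < Cmod w + Re w)%R -> (0 < Cmod (-w) + Re (-w))%R.
Proof.
  intros Hw Hn. rewrite Cmod_opp. apply Cmod_gt_0 in Hw.
  assert (H := re_le_Cmod w). apply Rabs_le_between in H. destruct w as [x y]. unfold Re in *. simpl in *. lra.
Qed.

Lemma root_pow N (w : C) : (1 <= N)%nat -> w <> 0 -> Cpow (root N w) N = w.
Proof.
  intros HN Hw. unfold root. destruct (Rlt_dec 0 (Cmod w + Re w)) as [H|H].
  - apply root_pos_pow; auto.
  - rewrite Cpow_mult_l, root_pos_pow; auto. 2: apply neg_case; auto.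
    rewrite cis_pow. replace (INR N * (PI / INR N))%R with PI by (field; apply INR_nz; auto).
    unfold cis. rewrite cos_PI, sin_PI. destruct w as [x y]. unfold Cmult, Copp; simpl. f_equal; ring.
Qed.

Lemma Cpow_0 n : (1 <= n)%nat -> Cpow 0 n = 0.
Proof. intros H. destruct n. lia. simpl. ring. Qed.

Lemma root_nz N (w : C) : (1 <= N)%nat -> w <> 0 -> root N w <> 0.
Proof. intros HN Hw E. apply Hw. rewrite <- (root_pow N w HN Hw), E. apply Cpow_0; auto. Qed.

Definition omega (N : nat) : C := cis (2 * PI / INR N).

Lemma omega_N N : (1 <= N)%nat -> Cpow (omega N) N = 1.
Proof.
  intros HN. unfold omega. rewrite cis_pow.
  replace (INR N * (2 * PI / INR N))%R with (2 * PI)%R by (field; apply INR_nz; auto).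
  unfold cis. rewrite cos_2PI, sin_2PI. reflexivity.
Qed.

Lemma mu_omega_pow N k : (1 <= N)%nat -> mu N (Cpow (omega N) k).
Proof. intros HN. unfold mu. rewrite Cpow_comm, omega_N; auto. apply Cpow_1_l. Qed.

Lemma mu_nz N (z : C) : (1 <= N)%nat -> mu N z -> z <> 0.
Proof. intros HN Hm E. unfold mu in Hm. rewrite E, Cpow_0 in Hm; auto. apply C1_neq_0. auto. Qed.

Lemma mu_cis N (z : C) : (1 <= N)%nat -> mu N z -> exists th, z = cis th.
Proof.
  intros HN Hm. unfold mu in Hm.
  assert (H1 : Cmod z = 1%R).
  { assert (H := f_equal Cmod Hm). rewrite Cmod_pow, Cmod_1 in H.
    apply pow_R1 in H. destruct H as [H|H]; [|lia]. rewrite Rabs_pos_eq in H; auto. apply Cmod_ge_0. }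
  destruct (Rlt_dec 0 (Cmod z + Re z)) as [Hp|Hp].
  - exists (theta z). rewrite (polar_pos z Hp) at 1. rewrite H1. ring.
  - exists PI. assert (Hs := Cmod_sq z). rewrite H1 in Hs. destruct z as [a b]. simpl in *.
    unfold cis. rewrite cos_PI, sin_PI. f_equal; nra.
Qed.

Lemma mu_is_pow N (z : C) : (1 <= N)%nat -> mu N z -> exists k, z = Cpow (omega N) k.
Proof.
  intros HN Hm. destruct (mu_cis N z HN Hm) as [th Hth]. subst z.
  unfold mu in Hm. rewrite cis_pow in Hm.
  assert (Hc : cos (INR N * th) = 1%R) by (apply (f_equal fst) in Hm; exact Hm).
  assert (Hs : sin (INR N * th / 2) = 0%R).
  { assert (H := cos_2a_sin (INR N * th / 2)). replace (2 * (INR N * th / 2))%R with (INR N * th)%R in H by field.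
    rewrite Hc in H. nra. }
  apply sin_eq_0_0 in Hs. destruct Hs as [k Hk].
  assert (HNz := INR_nz N HN).
  set (a := (2 * PI / INR N)%R).
  assert (Hth : th = (IZR k * a)%R). { unfold a. apply (Rmult_eq_reg_l (INR N)); auto. field_simplify; auto. lra. }
  set (K := Z.abs_nat k).
  exists (Z.to_nat (k + Z.of_nat N * Z.of_nat K)).
  unfold omega. fold a. rewrite cis_pow.
  assert (HK : Z.of_nat K = Z.abs k) by (unfold K; lia).
  assert (Hnn : (0 <= k + Z.of_nat N * Z.of_nat K)%Z) by (rewrite HK; nia).
  rewrite INR_IZR_INZ, Z2Nat.id by exact Hnn.
  rewrite plus_IZR, mult_IZR, <- !INR_IZR_INZ.
  rewrite Hth. unfold cis.
  replace ((IZR k + INR N * INR K) * a)%R with (IZR k * a + 2 * INR K * PI)%R by (unfold a; field; auto).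
  rewrite cos_period, sin_period. reflexivity.
Qed.

Lemma Rcont_compC (A : C -> R) (f : C -> C) x : Ccont f x -> Rcont A (f x) -> Rcont (fun y => A (f y)) x.
Proof.
  intros Hf HA. apply Rcont_eps. intros eps.
  destruct (Rcont_loc A (f x) HA eps) as [d Hd].
  generalize (Hf d). apply filter_imp. intros y Hy. apply Hd. exact Hy.
Qed.

Lemma Ccont_opp x : Ccont (fun y => - y) x.
Proof. intros eps. apply (locC _ x eps). intros y Hy.
  replace (- y - - x) with (- (y - x)) by ring. rewrite Cmod_opp. auto. Qed.

Lemma cont_atan r : continuity_pt atan r.
Proof. apply derivable_continuous_pt, derivable_pt_atan. Qed.

Lemma Rcont_theta (w0 : C) : (0 < Cmod w0 + Re w0)%R -> Rcont theta w0.
Proof.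
  intros Hp. unfold theta. apply Rcont_mult. apply Rcont_const.
  apply (Rcont_compR (fun w => Im w / (Cmod w + Re w))%R atan). 2: apply cont_atan.
  unfold Rdiv. apply Rcont_mult. apply Rcont_Im. apply Rcont_inv. 2: lra.
  apply Rcont_plus. apply Rcont_Cmod. apply Rcont_Re.
Qed.

Lemma Ccont_root_pos N (w0 : C) : (0 < Cmod w0 + Re w0)%R -> Ccont (root_pos N) w0.
Proof.
  intros Hp. unfold root_pos.
  assert (Hr : (0 < Cmod w0)%R).
  { assert (H := Cmod_sq w0). assert (H0 := Cmod_ge_0 w0). destruct w0 as [x y]; unfold Re in *; simpl in *. nra. }
  apply Ccont_mult.
  - apply Ccont_RtoC. apply (Rcont_compR Cmod (fun r => Rpower r (/ INR N))). apply Rcont_Cmod.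
    apply derivable_continuous_pt. exists ((/ INR N) * Rpower (Cmod w0) (/ INR N - 1))%R.
    apply derivable_pt_lim_power. auto.
  - unfold cis. apply Ccont_pair.
    + apply (Rcont_compR (fun w => theta w / INR N)%R cos). 2: apply continuity_cos.
      unfold Rdiv. apply Rcont_mult. apply Rcont_theta; auto. apply Rcont_const.
    + apply (Rcont_compR (fun w => theta w / INR N)%R sin). 2: apply continuity_sin.
      unfold Rdiv. apply Rcont_mult. apply Rcont_theta; auto. apply Rcont_const.
Qed.

Lemma cisPI_N N (w : C) : (1 <= N)%nat -> Cpow (cis (PI / INR N)) N * (- w) = w.
Proof.
  intros HN. rewrite cis_pow. replace (INR N * (PI / INR N))%R with PI by (field; apply INR_nz; auto).
  unfold cis. rewrite cos_PI, sin_PI. destruct w as [x y]. unfold Cmult, Copp; simpl. f_equal; ring.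
Qed.

Lemma Rcont_CR x : Rcont (fun w => Cmod w + Re w)%R x.
Proof. apply Rcont_plus. apply Rcont_Cmod. apply Rcont_Re. Qed.

Lemma branch N (w0 : C) : (1 <= N)%nat -> w0 <> 0 ->
  exists h : C -> C, exd h w0 /\ @locally CU w0 (fun w => Cpow (h w) N = w).
Proof.
  intros HN Hw0.
  destruct (Rlt_dec 0 (Cmod w0 + Re w0)) as [Hp|Hp].
  - assert (Hl : @locally CU w0 (fun w => Cpow (root_pos N w) N = w)).
    { generalize (Rcont_pos _ _ (Rcont_CR w0) Hp). apply filter_imp. intros w Hw.
      apply root_pos_pow; auto. }
    exists (root_pos N). split; auto.
    apply (inv_branch _ w0 N HN). apply Ccont_root_pos; auto.
    intro E. apply Hw0. rewrite <- (root_pos_pow N w0 HN Hp), E. apply Cpow_0; auto.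
    exact Hl.
  - assert (Hp' := neg_case w0 Hw0 Hp).
    set (h := fun w => cis (PI / INR N) * root_pos N (- w)).
    assert (Hl : @locally CU w0 (fun w => Cpow (h w) N = w)).
    { assert (Hc : Rcont (fun w => Cmod (- w) + Re (- w))%R w0).
      { apply (Rcont_compC (fun w => Cmod w + Re w)%R (fun w => - w)). apply Ccont_opp. apply Rcont_CR. }
      generalize (Rcont_pos _ _ Hc Hp'). apply filter_imp. intros w Hw.
      unfold h. rewrite Cpow_mult_l, root_pos_pow; auto. apply cisPI_N; auto. }
    exists h. split; auto.
    apply (inv_branch _ w0 N HN).
    + unfold h. apply Ccont_mult. apply Ccont_const.
      apply (Ccont_comp (fun w => - w) (root_pos N)). apply Ccont_opp. apply Ccont_root_pos; auto.
    + intro E. apply Hw0. rewrite <- (locally_singleton _ _ Hl), E. apply Cpow_0; auto.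
    + exact Hl.
Qed.

Lemma holo_from_branch (psi g : C -> C) (j N : nat) : (1 <= N)%nat -> holo_Cstar psi ->
  (forall w z : C, w <> 0 -> z <> 0 -> Cpow z N = w -> g w = psi z * / Cpow z j) ->
  holo_Cstar g.
Proof.
  intros HN Hpsi Hg w0 Hw0.
  destruct (branch N w0 HN Hw0) as [h [Hd Hl]].
  assert (Hh : forall w : C, w <> 0 -> Cpow (h w) N = w -> h w <> 0).
  { intros w Hw E E2. apply Hw. rewrite <- E, E2. apply Cpow_0; auto. }
  apply (exd_ext_loc (fun w => psi (h w) * / Cpow (h w) j)).
  - generalize (filter_and _ _ Hl (loc_nz w0 Hw0)). apply filter_imp. intros w [H1 H2].
    symmetry. apply Hg; auto.
  - assert (Hh0 : h w0 <> 0) by (apply Hh; auto; apply (locally_singleton _ _ Hl)).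
    apply exd_mult.
    + apply (exd_comp psi h); auto. apply Hpsi; auto.
    + apply (exd_inv_comp (fun w => Cpow (h w) j)). apply (exd_comp (fun z => Cpow z j) h); auto.
      apply exd_Cpow. apply Cpow_nz; auto.
Qed.

Lemma Cmult_nz (a b : C) : a <> 0 -> b <> 0 -> a * b <> 0.
Proof.
  intros Ha Hb. apply Cmod_gt_0. rewrite Cmod_mult. apply Cmod_gt_0 in Ha. apply Cmod_gt_0 in Hb. nra.
Qed.

Theorem mainTheorem9 (N : nat) (HN : (1 <= N)%nat) :
  (forall psi sigma : C -> C,
     strict_endo N psi sigma <->
     exists (m : Z) (g : C -> C),
       holo_map_Cstar g /\
       (forall zeta : C, mu N zeta -> sigma zeta = Czpow zeta m) /\
       (forall z : C, z <> 0 -> psi z = Czpow z m * g (Cpow z N)))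
  /\
  (forall (m : Z) (g g' : C -> C),
     holo_map_Cstar g -> holo_map_Cstar g' ->
     (two_iso N (fun z : C => Czpow z m * g (Cpow z N))
                (fun z : C => Czpow z m * g' (Cpow z N)) <->
      exists a : C, mu N a /\ forall w : C, w <> 0 -> g' w = a * g w)).
Proof.
  split.
  - intros psi sigma. split.
    + intros [[Hh Hm] [Hmu [Hmul Heq]]].
      assert (Hmo : mu N (omega N)) by (rewrite <- (Cpow_1_r (omega N)); apply mu_omega_pow; auto).
      destruct (mu_is_pow N (sigma (omega N)) HN (Hmu _ Hmo)) as [j Hj].
      assert (Hm1 : mu N 1) by (unfold mu; apply Cpow_1_l).
      assert (Hs1 : sigma 1 = 1).
      { assert (H := Hmul 1 1 Hm1 Hm1). rewrite Cmult_1_l in H.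
        assert (Hn := mu_nz N _ HN (Hmu 1 Hm1)).
        transitivity (sigma 1 * sigma 1 * / sigma 1). field; auto. rewrite <- H. apply Cinv_r; auto. }
      assert (Hpow : forall k, sigma (Cpow (omega N) k) = Cpow (sigma (omega N)) k).
      { induction k. simpl. auto. cbn [Cpow]. rewrite Hmul; auto. rewrite IHk. auto.
        apply mu_omega_pow; auto. }
      assert (Hsig : forall z, mu N z -> sigma z = Cpow z j).
      { intros z Hz. destruct (mu_is_pow N z HN Hz) as [k Hk]. subst z.
        rewrite Hpow, Hj. apply Cpow_comm. }
      exists (Z.of_nat j).
      set (g := fun w => psi (root N w) * / Cpow (root N w) j).
      assert (Hinv : forall w z : C, w <> 0 -> z <> 0 -> Cpow z N = w -> g w = psi z * / Cpow z j).
      { intros w z Hw Hz Hzw. unfold g.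
        set (r := root N w). assert (Hr : r <> 0) by (apply root_nz; auto).
        assert (HrN : Cpow r N = w) by (apply root_pow; auto).
        set (zeta := z * / r).
        assert (Hzeta : mu N zeta).
        { unfold mu, zeta. rewrite Cpow_mult_l, Cpow_inv, Hzw, HrN; auto. apply Cinv_r; auto. }
        assert (Hz0 : zeta <> 0) by (apply (mu_nz N); auto).
        assert (Ez : z = zeta * r) by (unfold zeta; field; auto).
        rewrite Ez. rewrite Heq; auto. rewrite Hsig; auto. rewrite Cpow_mult_l.
        assert (H1 := Cpow_nz zeta j Hz0). assert (H2 := Cpow_nz r j Hr).
        field. split; auto. }
      exists g. split; [|split].
      * split.
        -- apply (holo_from_branch psi g j N HN Hh Hinv).
        -- intros w Hw. unfold g. apply Cmult_nz. apply Hm. apply root_nz; auto.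
           apply Cinv_nz, Cpow_nz, root_nz; auto.
      * intros zeta Hz. rewrite Czpow_of_nat. auto.
      * intros z Hz. rewrite Czpow_of_nat. rewrite (Hinv (Cpow z N) z); auto.
        assert (H1 := Cpow_nz z j Hz). field. auto. apply Cpow_nz; auto.
    + intros [m [g [[Hgh Hgm] [Hs Hp]]]].
      split; [split|split; [|split]].
      * intros z0 Hz0.
        apply (exd_ext_loc (fun z => Czpow z m * g (Cpow z N))).
        -- generalize (loc_nz z0 Hz0). apply filter_imp. intros z Hz. symmetry. auto.
        -- apply exd_mult. apply exd_Czpow; auto.
           apply (exd_comp g (fun z => Cpow z N)). apply Hgh. apply Cpow_nz; auto. apply exd_Cpow.
      * intros z Hz. rewrite Hp; auto. apply Cmult_nz. apply Czpow_nz; auto. apply Hgm. apply Cpow_nz; auto.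
      * intros z Hz. rewrite Hs; auto. unfold mu. rewrite Cpow_Czpow. rewrite Hz. apply Czpow_one.
        apply (mu_nz N); auto.
      * intros a b Ha Hb. assert (Hab : mu N (a * b)).
        { unfold mu in *. rewrite Cpow_mult_l, Ha, Hb. ring. }
        rewrite !Hs; auto. apply Czpow_mult; apply (mu_nz N); auto.
      * intros a z Ha Hz. assert (Ha0 := mu_nz N a HN Ha).
        rewrite Hp. 2: apply Cmult_nz; auto. rewrite Hp; auto. rewrite Hs; auto.
        rewrite Czpow_mult; auto. rewrite Cpow_mult_l. unfold mu in Ha. rewrite Ha, Cmult_1_l. ring.
  - intros m g g' Hg Hg'. split.
    + intros [a [Ha H]]. exists a. split; auto. intros w Hw.
      set (z := root N w). assert (Hz : z <> 0) by (apply root_nz; auto).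
      assert (HzN : Cpow z N = w) by (apply root_pow; auto).
      assert (H1 := H z Hz). simpl in H1. rewrite HzN in H1.
      assert (Hc := Czpow_nz z m Hz).
      apply (f_equal (fun u => / Czpow z m * u)) in H1.
      replace (g' w) with (/ Czpow z m * (Czpow z m * g' w)) by (field; auto).
      rewrite H1. field. auto.
    + intros [a [Ha H]]. exists a. split; auto. intros z Hz. simpl.
      rewrite H. ring. apply Cpow_nz; auto.
Qed.
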